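(* Let $n\ge2$, $m\ge0$ and $p$ be fixed integers with $0\le p\le 2n+\lfloor m/2\rfloor-3$. Then there is a polynomial $\beta_p(j)$ in $j$ of degree at most $2(2n+\lfloor m/2\rfloor-3-p)$ such that for every integer $j$ with $1\le j\le n-1$, the coefficient of $x^p$ in $$(2x+m+1)_j\,(x-j+2)_{\lfloor m/2\rfloor+j-1}\,(x+m+2j+1)_{2n-2j-2}$$ equals $2^j\beta_p(j)$.
   Context: $(a)_k:=a(a+1)\cdots(a+k-1)$ for $k\ge1$, $(a)_0:=1$. *)

(* Defs.v *)
From HB Require Import structures.
From mathcomp Require Import all_boot all_order all_algebra.
Set Implicit Arguments. Unset Strict Implicit. Unset Printing Implicit Defensive.
Import Order.TTheory GRing.Theory Num.Theory.
Local Open Scope ring_scope.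

Definition poch (a : {poly rat}) (k : nat) : {poly rat} :=
  \prod_(i < k) (a + (i%:R)%:P).

Definition prodA9 (n m j : nat) : {poly rat} :=
  poch (2%:R *: 'X + (m%:R + 1)%:P) j
  * poch ('X - (j%:R)%:P + 2%:R%:P) (m./2 + j - 1)
  * poch ('X + (m%:R + 2 * j%:R + 1)%:P) (2 * n - 2 * j - 2).

(* Main.v *)
Require Import Defs.
From HB Require Import structures.
From mathcomp Require Import all_boot all_order all_algebra.
From mathcomp Require Import ring lra zify.
Import Order.TTheory GRing.Theory Num.Theory.
Set Implicit Arguments. Unset Strict Implicit.
Local Open Scope ring_scope.


Definition FF (d : nat) : {poly rat} := \prod_(i < d) ('X - (i%:R)%:P).

Lemma FF_size d : size (FF d) = d.+1.
Proof. rewrite /FF size_prod_XsubC; unlock index_enum; by rewrite -enumT size_enum_ord. Qed.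

Lemma FF_lead d : (FF d)`_d = 1.
Proof.
have := lead_coef_prod_XsubC (index_enum 'I_d) predT (fun i : 'I_d => (i%:R : rat)).
by rewrite /lead_coef -/(FF d) FF_size.
Qed.

Lemma FF_horner d x : (FF d).[x] = \prod_(i < d) (x - i%:R).
Proof. by rewrite /FF horner_prod; apply: eq_bigr => i _; rewrite hornerXsubC. Qed.

Lemma FF_sum d L : \sum_(l < L) (FF d).[l%:R] = (FF d.+1).[L%:R] / (d.+1)%:R.
Proof.
have hd : (d.+1)%:R != 0 :> rat by rewrite pnatr_eq0.
elim: L => [|L IH].
  by rewrite big_ord0 FF_horner big_ord_recl /= subrr mul0r mul0r.
rewrite big_ord_recr /= IH !FF_horner big_ord_recr /= [in RHS]big_ord_recl /=.
have -> : \prod_(i < d) ((L.+1)%:R - (@lift d.+1 ord0 i)%:R) = \prod_(i < d) (L%:R - i%:R :> rat).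
  by apply: eq_bigr => i _; rewrite /= /bump /= add1n -addn1 -[i.+1]addn1 !natrD; ring.
rewrite subr0; field; by move: hd; rewrite -addn1 natrD addrC.
Qed.

Lemma sum_poly d (q : {poly rat}) : (size q <= d)%N ->
  exists Q : {poly rat}, (size Q <= d.+1)%N /\
    forall L, \sum_(l < L) q.[l%:R] = Q.[L%:R].
Proof.
elim: d q => [|d IH] q hq.
  move: hq; rewrite leqn0 size_poly_eq0 => /eqP ->.
  exists 0; split; first by rewrite size_poly0.
  by move=> L; rewrite horner0 big1 // => i _; rewrite horner0.
pose a := q`_d.
pose q' := q - a *: FF d.
have hq' : (size q' <= d)%N.
  have h1 : (size q' <= d.+1)%N.
    apply: leq_trans (size_polyD _ _) _; rewrite size_polyN geq_max hq /=.
    by apply: leq_trans (size_scale_leq _ _) _; rewrite FF_size.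
  have h2 : q'`_d = 0 by rewrite coefB coefZ FF_lead mulr1 subrr.
  apply/leq_sizeP => k; rewrite leq_eqVlt => /orP [/eqP <- // | hk].
  by apply: (leq_sizeP _ _ h1).
have [Q' [hQ'1 hQ'2]] := IH q' hq'.
exists (Q' + (a / (d.+1)%:R) *: FF d.+1); split.
  apply: leq_trans (size_polyD _ _) _; rewrite geq_max (leq_trans hQ'1) //.
  by apply: leq_trans (size_scale_leq _ _) _; rewrite FF_size.
move=> L.
have -> : q = q' + a *: FF d by rewrite /q' subrK.
rewrite hornerD hornerZ mulrAC -mulrA -FF_sum mulr_sumr -hQ'2 -big_split /=.
by apply: eq_bigr => i _; rewrite hornerD hornerZ.
Qed.

Definition blk (c h : rat) (L : nat) : {poly rat} :=
  \prod_(i < L) (1 + (c + h * i%:R) *: 'X).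

Lemma coef_mul1aX (p : {poly rat}) a t :
  (p * (1 + a *: 'X))`_t.+1 = p`_t.+1 + a * p`_t.
Proof. by rewrite mulrDr mulr1 coefD -scalerAr coefZ coefMX. Qed.

Lemma coef0_mul1aX (p : {poly rat}) a :
  (p * (1 + a *: 'X))`_0 = p`_0.
Proof. by rewrite mulrDr mulr1 coefD -scalerAr coefZ coefMX /= mulr0 addr0. Qed.

Lemma blk_rec c h L t :
  (blk c h L)`_t.+1 = \sum_(l < L) (c + h * l%:R) * (blk c h l)`_t.
Proof.
elim: L => [|L IH].
  by rewrite big_ord0 /blk big_ord0 coefC.
by rewrite big_ord_recr /= /blk big_ord_recr /= coef_mul1aX -/(blk c h L) IH addrC.
Qed.

Lemma blk0 c h L : (blk c h L)`_0 = 1.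
Proof.
elim: L => [|L IH]; first by rewrite /blk big_ord0 coefC.
by rewrite /blk big_ord_recr /= coef0_mul1aX.
Qed.

Lemma blk_coef c h t : exists q : {poly rat}, (size q <= (2*t).+1)%N /\
  forall L, (blk c h L)`_t = q.[L%:R].
Proof.
elim: t => [|t [q [hq1 hq2]]].
  exists 1; split; first by rewrite size_poly1.
  by move=> L; rewrite blk0 hornerC.
have hs : (size ((c%:P + h *: 'X) * q)%R <= (2*t).+2)%N.
  apply: leq_trans (size_polyMleq _ _) _.
  have h2 : (size (c%:P + h *: 'X)%R <= 2)%N.
    apply: leq_trans (size_polyD _ _) _; rewrite geq_max (leq_trans (size_polyC_leq1 _)) //=.
    by apply: leq_trans (size_scale_leq _ _) _; rewrite size_polyX.
  move: h2 hq1; rewrite -subn1; move: (size _) (size q) => a b; lia.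
have [Q [hQ1 hQ2]] := @sum_poly _ _ hs.
exists Q; split; first by apply: leq_trans hQ1 _; lia.
move=> L; rewrite blk_rec -hQ2; apply: eq_bigr => l _.
by rewrite hornerM hornerD hornerC hornerZ hornerX hq2.
Qed.

Definition PD (n d : nat) (f : nat -> rat) := exists q : {poly rat},
  (size q <= d.+1)%N /\ forall j, (1 <= j <= n - 1)%N -> f j = q.[j%:R].

Lemma PD_le n d d' f : (d <= d')%N -> PD n d f -> PD n d' f.
Proof. move=> hd [q [h1 h2]]; exists q; split => //; lia. Qed.

Lemma PD_mul n d1 d2 f g : PD n d1 f -> PD n d2 g -> PD n (d1 + d2) (fun j => f j * g j).
Proof.
move=> [q [h1 h2]] [r [h3 h4]]; exists (q * r); split.
  apply: leq_trans (size_polyMleq _ _) _; lia.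
by move=> j hj; rewrite hornerM h2 ?h4.
Qed.

Lemma PD_sum n d K (F : nat -> nat -> rat) :
  (forall i, (i < K)%N -> PD n d (F i)) -> PD n d (fun j => \sum_(i < K) F i j).
Proof.
elim: K => [|K IH] hF.
  exists 0; split; first by rewrite size_poly0.
  by move=> j _; rewrite big_ord0 horner0.
have [q [h1 h2]] := IH (fun i hi => hF i (ltnW hi)).
have [r [h3 h4]] := hF K (ltnSn K).
exists (q + r); split.
  by apply: leq_trans (size_polyD _ _) _; rewrite geq_max h1 h3.
by move=> j hj; rewrite big_ord_recr /= hornerD h2 ?h4.
Qed.

Lemma PD_conv n (A B : nat -> {poly rat}) :
  (forall t, PD n (2*t)%N (fun j => (A j)`_t)) ->
  (forall t, PD n (2*t)%N (fun j => (B j)`_t)) ->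
  forall t, PD n (2*t)%N (fun j => (A j * B j)`_t).
Proof.
move=> hA hB t.
have := @PD_sum n (2*t) t.+1 (fun i j => (A j)`_i * (B j)`_(t - i)%N).
move=> H; have [q [h1 h2]] : PD n (2*t)%N (fun j => \sum_(i < t.+1) (A j)`_i * (B j)`_(t - i)%N).
  apply: H => i hi; have H2 := PD_mul (hA i) (hB (t - i)%N); apply: (PD_le _ H2); lia.
by exists q; split => // j hj; rewrite coefM h2.
Qed.

Lemma blk_PD n c h (Lf : nat -> nat) (al be : rat) t :
  (forall j, (1 <= j <= n - 1)%N -> (Lf j)%:R = al + be * j%:R) ->
  PD n (2*t)%N (fun j => (blk c h (Lf j))`_t).
Proof.
move=> hL; have [q [h1 h2]] := blk_coef c h t.
exists (q \Po (al%:P + be *: 'X)); split.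
  apply: leq_trans (size_comp_poly_leq _ _) _.
  have h3 : (size (al%:P + be *: 'X)%R <= 2)%N.
    apply: leq_trans (size_polyD _ _) _; rewrite geq_max (leq_trans (size_polyC_leq1 _)) //=.
    by apply: leq_trans (size_scale_leq _ _) _; rewrite size_polyX.
  move: h3 h1; rewrite -!subn1; move: (size _) (size q) => a b; nia.
by move=> j hj; rewrite h2 horner_comp hornerD hornerC hornerZ hornerX hL.
Qed.

Definition lin (u a : rat) : {poly rat} := u *: 'X + a%:P.
Definition rl (u a : rat) : {poly rat} := u%:P + a *: 'X.
Definition RevP (P R : {poly rat}) (L : nat) :=
  [/\ (size P <= L.+1)%N, (size R <= L.+1)%N &
      forall i, (i <= L)%N -> P`_i = R`_(L - i)%N].

Lemma size_lin u a : (size (lin u a) <= 2)%N.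
Proof.
rewrite /lin addrC.
apply: leq_trans (size_polyD _ _) _; rewrite geq_max (leq_trans (size_polyC_leq1 _)) //=.
by apply: leq_trans (size_scale_leq _ _) _; rewrite size_polyX.
Qed.

Lemma size_rl u a : (size (rl u a) <= 2)%N.
Proof.
rewrite /rl.
apply: leq_trans (size_polyD _ _) _; rewrite geq_max (leq_trans (size_polyC_leq1 _)) //=.
by apply: leq_trans (size_scale_leq _ _) _; rewrite size_polyX.
Qed.

Lemma RevP1 : RevP 1 1 0.
Proof. by split; rewrite ?size_poly1 // => i; rewrite leqn0 => /eqP ->. Qed.

Lemma RevP_step P R L u a : RevP P R L -> RevP (P * lin u a) (R * rl u a) L.+1.
Proof.
case=> hP hR hc; split.
- apply: leq_trans (size_polyMleq _ _) _; move: hP (size_lin u a).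
  rewrite -subn1; move: (size P) (size _) => x y; lia.
- apply: leq_trans (size_polyMleq _ _) _; move: hR (size_rl u a).
  rewrite -subn1; move: (size R) (size _) => x y; lia.
move=> i hi.
have cP : forall k, (P * lin u a)`_k = u * (if k == 0%N then 0 else P`_k.-1) + P`_k * a.
  by move=> k; rewrite /lin mulrDr coefD -scalerAr coefZ coefMX coefMC.
have cR : forall k, (R * rl u a)`_k = R`_k * u + a * (if k == 0%N then 0 else R`_k.-1).
  by move=> k; rewrite /rl mulrDr coefD -scalerAr coefZ coefMX coefMC.
rewrite cP cR.
case: i hi => [|i] hi.
  by rewrite subn0 /= ((leq_sizeP _ _ hR) L.+1 (leqnn _)) hc // subn0 mulr0 mul0r !add0r mulrC.
rewrite subSS /= hc //.
case: (ltnP i L) => hi'.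
  have -> : (L - i == 0)%N = false by apply/negbTE; rewrite subn_eq0 -ltnNge.
  by rewrite hc // subnS mulrC [a * _]mulrC.
have ei : i = L by apply/eqP; rewrite eqn_leq hi' andbT -ltnS.
by rewrite ei subnn /= ((leq_sizeP _ _ hP) L.+1 (leqnn _)) mul0r mulr0 !addr0 mulrC.
Qed.

Lemma RevP_prod P R L K (u a : nat -> rat) : RevP P R L ->
  RevP (P * \prod_(i < K) lin (u i) (a i)) (R * \prod_(i < K) rl (u i) (a i)) (L + K).
Proof.
move=> H; elim: K => [|K IH]; first by rewrite !big_ord0 !mulr1 addn0.
by rewrite !big_ord_recr /= !mulrA addnS; apply: RevP_step.
Qed.

Lemma natr_eqR (x y : nat) : x = y -> (x%:R : rat) = y%:R.
Proof. by move=> ->. Qed.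

Lemma prodA9_lin n m j :
  prodA9 n m j = 1 * \prod_(i < j) lin 2 (m%:R + 1 + i%:R)
    * \prod_(i < (m./2 + j - 1)%N) lin 1 (2 - j%:R + i%:R)
    * \prod_(i < (2 * n - 2 * j - 2)%N) lin 1 (m%:R + 2 * j%:R + 1 + i%:R).
Proof.
rewrite /prodA9 /poch mul1r; congr (_ * _ * _); apply: eq_bigr => i _;
  rewrite /lin ?scale1r !polyCD ?polyCN; ring.
Qed.

Lemma blk1 m j : \prod_(i < j) rl 2 (m%:R + 1 + i%:R)
  = (2 ^+ j)%:P * blk ((m%:R + 1) / 2) (1 / 2) j.
Proof.
have -> : (2 ^+ j)%:P = \prod_(i < j) (2%:P : {poly rat}).
  by rewrite prodr_const card_ord rmorphXn.
rewrite /blk -big_split /=; apply: eq_bigr => i _.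
rewrite /rl mulrDr mulr1 mul_polyC scalerA; congr (_ + _ *: _); field; exact: oner_neq0 || by [].
Qed.

Lemma blk2 m j : (1 <= j)%N ->
  \prod_(i < (m./2 + j - 1)%N) rl 1 (2 - j%:R + i%:R)
  = blk (m./2)%:R (-1) (m./2 + j - 1).
Proof.
move=> hj; rewrite /blk (reindex_inj rev_ord_inj) /=; apply: eq_bigr => i _.
rewrite /rl polyC1; congr (1 + _ *: _).
have E : ((m./2 + j - 1) - i.+1 + i + 1 + 1 = m./2 + j)%N by have := ltn_ord i; lia.
have := natr_eqR E; rewrite !natrD; lra.
Qed.

Lemma blk3 n m j :
  \prod_(i < (2 * n - 2 * j - 2)%N) rl 1 (m%:R + 2 * j%:R + 1 + i%:R)
  = blk (m%:R + 2 * n%:R - 2) (-1) (2 * n - 2 * j - 2).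
Proof.
rewrite /blk (reindex_inj rev_ord_inj) /=; apply: eq_bigr => i _.
rewrite /rl polyC1; congr (1 + _ *: _).
have E : ((2 * n - 2 * j - 2) - i.+1 + i + 1 + 2 * j + 2 = 2 * n)%N by have := ltn_ord i; lia.
have := natr_eqR E; rewrite !natrD; lra.
Qed.

Theorem lemmaA9 (n m p : nat) :
  (2 <= n)%N -> (p <= 2 * n + m./2 - 3)%N ->
  exists beta : {poly rat},
    (size beta <= (2 * (2 * n + m./2 - 3 - p)).+1)%N /\
    forall j : nat, (1 <= j <= n - 1)%N ->
      (prodA9 n m j)`_p = 2%:R ^+ j * beta.[j%:R].
Proof.
move=> hn hp.
set k := (2 * n + m./2 - 3 - p)%N.
have [q [hq1 hq2]] : PD n (2 * k)%N (fun j =>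
   (blk ((m%:R + 1) / 2) (1 / 2) j *
    (blk (m./2)%:R (-1) (m./2 + j - 1) *
     blk (m%:R + 2 * n%:R - 2) (-1) (2 * n - 2 * j - 2)))`_k).
  apply: PD_conv => t.
    by apply: (@blk_PD n _ _ _ 0 1) => j _; rewrite add0r mul1r.
  apply: PD_conv => t'.
    apply: (@blk_PD n _ _ _ ((m./2)%:R - 1) 1) => j /andP [hj1 _].
    have E : (m./2 + j - 1 + 1 = m./2 + j)%N by lia.
    have := natr_eqR E; rewrite !natrD; lra.
  apply: (@blk_PD n _ _ _ (2 * n%:R - 2) (-2)) => j /andP [_ hj2].
  have E : (2 * n - 2 * j - 2 + 2 * j + 2 = 2 * n)%N by lia.
  have := natr_eqR E; rewrite !natrD; lra.
exists q; split => // j /andP [hj1 hj2].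
have H := RevP_prod (2 * n - 2 * j - 2)%N (fun _ => 1)
   (fun i : nat => m%:R + 2 * j%:R + 1 + i%:R)
  (RevP_prod (m./2 + j - 1)%N (fun _ => 1) (fun i : nat => 2 - j%:R + i%:R)
  (RevP_prod j (fun _ => 2) (fun i : nat => m%:R + 1 + i%:R) RevP1)).
have hL : (0 + j + (m./2 + j - 1) + (2 * n - 2 * j - 2) = 2 * n + m./2 - 3)%N by lia.
rewrite hL in H; case: H => _ _ hc.
rewrite prodA9_lin hc // -/k blk1 blk2 // blk3 mul1r -!mulrA coefCM -hq2 //.
by apply/andP.
Qed.
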